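(* Let $2\le p\le q$, $n=p+q$. Let $W_1,\ldots,W_l \subset \mathbb{R}^{p,q}$ be a finite family of pairwise distinct, non-empty open sets of intersection type. Then $W_1 \cup \cdots \cup W_l$ is not connected if and only if one of the following holds: (1) there exist $v \in \mathcal{C} \setminus \{0\}$, real numbers $\alpha_1,\ldots,\alpha_l$ and $1 \leq k_0 \leq l-1$ such that, up to permutation of the indices, $\alpha_1 > \cdots > \alpha_{k_0} \geq \alpha_{k_0+1} > \cdots > \alpha_l$, $W_i = H_{v,\alpha_i}$ for all $i \leq k_0$ and $W_i = H_{-v,-\alpha_i}$ for all $i > k_0$; or (2) $l=2$ and, up to permutation, $W_1 = v + U_S$ and $W_2 = v + U_T$ for some $v \in \mathbb{R}^{p,q}$.
   Context: On $\mathbb{R}^{p,q}$: $b(v,w) = -v_1w_1 - \cdots - v_pw_p + v_{p+1}w_{p+1} + \cdots + v_nw_n$, $q(v)=b(v,v)$, $\mathcal{C}=\{q=0\}$, $U_S=\{q>0\}$, $U_T=\{q<0\}$, and for $v\in\mathcal{C}\setminus\{0\}$, $\alpha\in\mathbb{R}$, $H_{v,\alpha}=\{w: b(v,w)>\alpha\}$. An open subset of $\mathbb{R}^{p,q}$ is of intersection type if it is of the form $v_0+U_S$ or $v_0+U_T$ for some $v_0\in\mathbb{R}^{p,q}$, or $H_{v_0,\alpha}$ for some $v_0\in\mathcal{C}\setminus\{0\}$ and $\alpha\in\mathbb{R}$. *)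

(* Defs.v *)
From Stdlib Require Import Reals.
From mathcomp Require Import all_boot.
Set Implicit Arguments. Unset Strict Implicit. Unset Printing Implicit Defensive.

Local Open Scope R_scope.

Definition pt (p q : nat) := 'I_(p + q) -> R.
Definition pset (p q : nat) := pt p q -> Prop.

Definition vadd p q (v w : pt p q) : pt p q := fun i => v i + w i.
Definition vopp p q (v : pt p q) : pt p q := fun i => - v i.
Definition vzero p q : pt p q := fun _ => 0.

Definition bform p q (v w : pt p q) : R :=
  \big[Rplus/0]_(i < p + q)
     ((if (i < p)%N then -1 else 1) * v i * w i).
Definition qform p q (v : pt p q) : R := bform v v.

Definition cone p q : pset p q := fun v => qform v = 0.
Definition US p q : pset p q := fun v => qform v > 0.
Definition UT p q : pset p q := fun v => qform v < 0.
Definition Hset p q (v : pt p q) (alpha : R) : pset p q :=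
  fun w => bform v w > alpha.

Definition translate p q (v0 : pt p q) (A : pset p q) : pset p q :=
  fun w => exists u, A u /\ w = vadd v0 u.

Definition set_eq p q (A B : pset p q) : Prop := forall x, A x <-> B x.

(* Euclidean topology (via the equivalent sup-norm balls) *)
Definition is_open p q (U : pset p q) : Prop :=
  forall x, U x -> exists eps, eps > 0 /\
    forall y : pt p q, (forall i, Rabs (y i - x i) < eps) -> U y.

Definition is_connected p q (A : pset p q) : Prop :=
  ~ exists U1 U2 : pset p q,
      is_open U1 /\ is_open U2 /\
      (forall x, A x -> U1 x \/ U2 x) /\
      (exists x, A x /\ U1 x) /\ (exists x, A x /\ U2 x) /\
      (forall x, A x -> U1 x -> U2 x -> False).

Definition intersection_type p q (W : pset p q) : Prop :=
  (exists v0, set_eq W (translate v0 (@US p q))) \/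
  (exists v0, set_eq W (translate v0 (@UT p q))) \/
  (exists v0 alpha, cone v0 /\ v0 <> @vzero p q /\ set_eq W (Hset v0 alpha)).

Definition union_fam p q l (W : 'I_l -> pset p q) : pset p q :=
  fun x => exists i, W i x.

(* Main.v *)
From HB Require Import structures.
Require Import Defs.
From Stdlib Require Import Reals Lra Classical FunctionalExtensionality ClassicalEpsilon.
From mathcomp Require Import all_boot.

Module MA.
Local Open Scope R_scope.
Set Implicit Arguments. Unset Strict Implicit.

Lemma Rplus_assoc' : associative Rplus. Proof. by move=> *; rewrite Rplus_assoc. Qed.
HB.instance Definition _ := Monoid.isComLaw.Build R 0 Rplus Rplus_assoc' Rplus_comm Rplus_0_l.

Section Sums.
Variable n : nat.
Implicit Types F G : 'I_n -> R.

Lemma sum_lin a b F G :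
  \big[Rplus/0]_(i < n) (a * F i + b * G i) =
  a * \big[Rplus/0]_(i < n) F i + b * \big[Rplus/0]_(i < n) G i.
Proof.
apply: (big_rec3 (fun x y z => x = a * y + b * z)); first ring.
move=> i x y z _ ->; ring.
Qed.

Lemma sum_le F G : (forall i, F i <= G i) ->
  \big[Rplus/0]_(i < n) F i <= \big[Rplus/0]_(i < n) G i.
Proof.
move=> H; apply: (big_rec2 (fun x y => x <= y)); first lra.
move=> i x y _ hxy; have := H i; lra.
Qed.

Lemma sum_ge0 F : (forall i, 0 <= F i) -> 0 <= \big[Rplus/0]_(i < n) F i.
Proof.
move=> H; apply: (big_rec (fun x => 0 <= x)); first lra.
move=> i x _ hx; have := H i; lra.
Qed.

Lemma sum_ge_term F k : (forall i, 0 <= F i) -> F k <= \big[Rplus/0]_(i < n) F i.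
Proof.
move=> H; rewrite (bigD1 k) //=.
rewrite -[X in X <= _]Rplus_0_r; apply: Rplus_le_compat_l.
apply: (big_rec (fun x => 0 <= x)); first lra.
move=> i x _ hx; have := H i; lra.
Qed.

Lemma sum_single F k : (forall i, i != k -> F i = 0) ->
  \big[Rplus/0]_(i < n) F i = F k.
Proof.
move=> H; rewrite (bigD1 k) //= big1 ?Rplus_0_r // => i /H //.
Qed.

Lemma sum_ext F G : (forall i, F i = G i) ->
  \big[Rplus/0]_(i < n) F i = \big[Rplus/0]_(i < n) G i.
Proof. by move=> H; apply: eq_bigr => i _; apply: H. Qed.

End Sums.

Section Forms.
Variables p q : nat.
Notation pt := (pt p q).
Implicit Types v w x y d : pt.

Definition sg (i : 'I_(p+q)) : R := if (i < p)%N then -1 else 1.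
Lemma sg2 i : sg i * sg i = 1.
Proof. rewrite /sg; case: (i < p)%N; ring. Qed.

Definition eip (v w : pt) : R := \big[Rplus/0]_(i < p + q) (v i * w i).
Definition Jf (v : pt) : pt := fun i => sg i * v i.
Definition smul (a : R) (v : pt) : pt := fun i => a * v i.
Definition lc (a : R) (x : pt) (b : R) (y : pt) : pt := fun i => a * x i + b * y i.
Definition ev (k : 'I_(p+q)) : pt := fun i => if i == k then 1 else 0.

Lemma bform_E v w : bform v w = \big[Rplus/0]_(i < p + q) (sg i * v i * w i).
Proof. by []. Qed.

Lemma bform_sym v w : bform v w = bform w v.
Proof. rewrite /bform; apply: sum_ext => i; ring. Qed.

Lemma bform_lc v a x b y : bform v (lc a x b y) = a * bform v x + b * bform v y.
Proof.
rewrite /bform -sum_lin; apply: sum_ext => i; rewrite /lc; ring.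
Qed.

Lemma bform_lcl v a x b y : bform (lc a x b y) v = a * bform x v + b * bform y v.
Proof. by rewrite bform_sym bform_lc !(bform_sym v). Qed.

Lemma bform_J v w : bform v (Jf w) = eip v w.
Proof.
rewrite /bform /eip; apply: sum_ext => i; rewrite /Jf.
rewrite /sg; case: (i < p)%N; ring.
Qed.

Lemma bform_ev d k : bform d (ev k) = sg k * d k.
Proof.
rewrite /bform (sum_single (k:=k)).
  by rewrite /ev eqxx /sg; ring.
by move=> i /negbTE; rewrite /ev => ->; ring.
Qed.

Lemma eip_pos v : v <> @vzero p q -> 0 < eip v v.
Proof.
move=> hv.
have [k hk] : exists k, v k <> 0.
  apply: NNPP => H; apply: hv; apply: functional_extensionality => i.
  apply: NNPP => H2; apply: H; exists i; exact: H2.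
have := @sum_ge_term _ (fun i => v i * v i) k (fun i => Rle_0_sqr (v i)).
rewrite /eip; have : 0 < v k * v k by nra.
lra.
Qed.

Lemma bform_smul v a w : bform v (smul a w) = a * bform v w.
Proof.
have -> : smul a w = lc a w 0 w by apply: functional_extensionality => i; rewrite /smul /lc; ring.
rewrite bform_lc; ring.
Qed.

Lemma bform_smull v a w : bform (smul a w) v = a * bform w v.
Proof. by rewrite bform_sym bform_smul bform_sym. Qed.

Lemma bform_opp v w : bform (vopp v) w = - bform v w.
Proof.
have -> : vopp v = smul (-1) v by apply: functional_extensionality => i; rewrite /smul /vopp; ring.
rewrite bform_smull; ring.
Qed.

End Forms.

End MA.
Import MA.

Module MB.
Local Open Scope R_scope.
Set Implicit Arguments. Unset Strict Implicit.

Section Seg.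
Variables p q : nat.
Notation pt := (pt p q).
Definition seg (x y : pt) (t : R) : pt := fun i => x i + t * (y i - x i).

Lemma seg0 x y : seg x y 0 = x.
Proof. apply: functional_extensionality => i; rewrite /seg; ring. Qed.
Lemma seg1 x y : seg x y 1 = y.
Proof. apply: functional_extensionality => i; rewrite /seg; ring. Qed.

Lemma seg_near (x y : pt) eps : eps > 0 -> exists d, d > 0 /\
  forall s t, Rabs (s - t) < d -> forall i, Rabs (seg x y s i - seg x y t i) < eps.
Proof.
move=> he.
set M := 1 + \big[Rplus/0]_(i < p + q) Rabs (y i - x i).
have hS : 0 <= \big[Rplus/0]_(i < p + q) Rabs (y i - x i).
  by apply: sum_ge0 => i; apply: Rabs_pos.
have hM : M > 0 by rewrite /M; lra.
exists (eps / M); split; first by apply: Rdiv_lt_0_compat.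
move=> s t hst i.
have hi : Rabs (y i - x i) <= M.
  have := @sum_ge_term _ (fun i => Rabs (y i - x i)) i (fun i => Rabs_pos _).
  rewrite /M; lra.
have -> : seg x y s i - seg x y t i = (s - t) * (y i - x i) by rewrite /seg; ring.
rewrite Rabs_mult.
have h1 : Rabs (s - t) * M < eps.
  have := Rmult_lt_compat_r M _ _ hM hst.
  have -> : eps / M * M = eps by field; lra.
  done.
have := Rmult_le_compat_l (Rabs (s - t)) _ _ (Rabs_pos (s - t)) hi.
lra.
Qed.

Variables (W U1 U2 : pset p q).
Hypotheses (hU1 : is_open U1) (hU2 : is_open U2)
  (hcov : forall x, W x -> U1 x \/ U2 x)
  (hdis : forall x, W x -> U1 x -> U2 x -> False).

Lemma seg_U1 x y : (forall t, 0 <= t <= 1 -> W (seg x y t)) -> U1 x -> U1 y.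
Proof.
move=> hW hx.
set E := fun t => 0 <= t <= 1 /\ forall s, 0 <= s <= t -> U1 (seg x y s).
have hE0 : E 0.
  split; first lra. move=> s hs; have -> : s = 0 by lra. by rewrite seg0.
have hb : bound E by exists 1 => t [ht _]; lra.
have [tau [hub hlub]] := completeness E hb (ex_intro _ 0 hE0).
have ht0 : 0 <= tau by apply: hub.
have ht1 : tau <= 1 by apply: hlub => t [ht _]; lra.
have claim1 : forall s, 0 <= s < tau -> U1 (seg x y s).
  move=> s hs; apply: NNPP => hns.
  have : tau <= s.
    apply: hlub => t [ht hts]; apply: Rnot_lt_le => hst.
    by apply: hns; apply: hts; lra.
  lra.
have hWt : W (seg x y tau) by apply: hW; lra.
have hU1t : U1 (seg x y tau).
  case: (hcov hWt) => // h2.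
  exfalso.
  have [eps [he hball]] := hU2 h2.
  have [d [hd hnear]] := seg_near x y he.
  case: (Req_dec tau 0) => htz.
    by apply: (hdis hWt) => //; rewrite htz seg0.
  set s := Rmax 0 (tau - d / 2).
  have hs : 0 <= s < tau.
    rewrite /s; split; first by apply: Rmax_l.
    apply: Rmax_lub_lt; lra.
  have hsd : Rabs (s - tau) < d.
    rewrite /s; apply: Rabs_def1.
      have := Rmax_lub_lt 0 (tau - d/2) tau ltac:(lra) ltac:(lra).
      lra.
    have := Rmax_r 0 (tau - d/2); lra.
  apply: (hdis (x := seg x y s)).
  - apply: hW; lra.
  - by apply: claim1.
  - by apply: hball => i; apply: hnear.
have [eps [he hball]] := hU1 hU1t.
have [d [hd hnear]] := seg_near x y he.
case: (Req_dec tau 1) => htau.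
  by rewrite htau seg1 in hU1t.
exfalso.
set t' := Rmin 1 (tau + d / 2).
have ht' : tau < t'.
  rewrite /t'; apply: Rmin_glb_lt; lra.
have : t' <= tau.
  apply: hub; split.
    split; first lra. by apply: Rmin_l.
  move=> s hs.
  case: (Rlt_le_dec s tau) => hst; first by apply: claim1; lra.
  apply: hball => i; apply: hnear.
  apply: Rabs_def1.
    have := Rmin_r 1 (tau + d/2); rewrite -/t'; lra.
  lra.
lra.
Qed.

End Seg.

End MB.
Import MB.

Module MC.
Local Open Scope R_scope.
Set Implicit Arguments. Unset Strict Implicit.

Section Conn.
Variables p q : nat.
Notation pt := (pt p q).
Notation pset := (pset p q).

Definition linked (W : pset) (x y : pt) := forall t, 0 <= t <= 1 -> W (seg x y t).

Inductive reach (W : pset) : pt -> pt -> Prop :=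
| reach_refl x : reach W x x
| reach_step x y z : linked W x y -> reach W y z -> reach W x z.

Definition conn_piece (W : pset) := forall U1 U2 : pset,
  is_open U1 -> is_open U2 -> (forall x, W x -> U1 x \/ U2 x) ->
  (forall x, W x -> U1 x -> U2 x -> False) ->
  (forall x, W x -> U1 x) \/ (forall x, W x -> U2 x).

Lemma linked_sym W x y : linked W x y -> linked W y x.
Proof.
move=> h t ht.
have -> : seg y x t = seg x y (1 - t).
  by apply: functional_extensionality => i; rewrite /seg; ring.
apply: h; lra.
Qed.

Lemma reach_U1 W U1 U2 : is_open U1 -> is_open U2 -> (forall x, W x -> U1 x \/ U2 x) ->
  (forall x, W x -> U1 x -> U2 x -> False) ->
  forall x y, reach W x y -> (U1 x <-> U1 y).
Proof.
move=> o1 o2 hc hd x y; elim => [z|a b c hab _ IH]; first by [].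
split => h.
  by apply/IH; apply: (seg_U1 o1 o2 hc hd hab).
by apply: (seg_U1 o1 o2 hc hd (linked_sym hab)); apply/IH.
Qed.

Lemma conn_of_base W b : W b -> (forall x, W x -> reach W x b) -> conn_piece W.
Proof.
move=> hb hr U1 U2 o1 o2 hc hd.
case: (classic (U1 b)) => h.
  by left => x hx; apply/(reach_U1 o1 o2 hc hd (hr x hx)).
right => x hx.
case: (hc x hx) => // h1; exfalso; apply: h.
by apply/(reach_U1 o1 o2 hc hd (hr x hx)).
Qed.

Lemma conn_set_eq W W' : set_eq W W' -> conn_piece W' -> conn_piece W.
Proof.
move=> he hc U1 U2 o1 o2 hcov hd.
have [h|h] := hc U1 U2 o1 o2 (fun x hx => hcov x (proj2 (he x) hx))
  (fun x hx => hd x (proj2 (he x) hx)).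
  by left => x /he /h.
by right => x /he /h.
Qed.

Lemma conn_H v alpha : (exists x, Hset v alpha x) -> conn_piece (Hset v alpha).
Proof.
move=> [b hb]; apply: (conn_of_base hb) => x hx.
apply: (reach_step (y := b)); last by apply: reach_refl.
move=> t ht.
have -> : seg x b t = lc (1 - t) x t b.
  by apply: functional_extensionality => i; rewrite /seg /lc; ring.
rewrite /Hset bform_lc.
rewrite /Hset in hx hb.
case: (Req_dec t 0) => [->|ht0]; first lra.
have : t * bform v b > t * alpha by apply: Rmult_lt_compat_l; lra.
have : (1 - t) * bform v x >= (1 - t) * alpha.
  apply: Rle_ge; apply: Rmult_le_compat_l; lra.
lra.
Qed.

Lemma linked_translate (P : pset) a u w : linked P u w ->
  linked (translate a P) (vadd a u) (vadd a w).
Proof.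
move=> h t ht; exists (seg u w t); split; first by apply: h.
by apply: functional_extensionality => i; rewrite /seg /vadd; ring.
Qed.

Lemma reach_translate (P : pset) a u w : reach P u w ->
  reach (translate a P) (vadd a u) (vadd a w).
Proof.
elim => [z|x y z hxy _ IH]; first by apply: reach_refl.
by apply: reach_step IH; apply: linked_translate.
Qed.

Lemma conn_translate (P : pset) a b : P b -> (forall u, P u -> reach P u b) ->
  conn_piece (translate a P).
Proof.
move=> hb hr; apply: (conn_of_base (b := vadd a b)).
  by exists b; split.
move=> x [u [hu ->]]; apply: reach_translate; by apply: hr.
Qed.

Variable neg : 'I_(p+q) -> bool.
Definition sgn i : R := if neg i then -1 else 1.
Definition Qs (z : pt) : R := \big[Rplus/0]_(i < p + q) (sgn i * z i * z i).
Definition Pset : pset := fun z => Qs z > 0.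

Lemma Qs_ge_term z k : (forall i, neg i -> z i = 0) -> ~~ neg k -> z k * z k <= Qs z.
Proof.
move=> h0 hk.
have -> : z k * z k = sgn k * z k * z k by rewrite /sgn (negbTE hk); ring.
apply: (@sum_ge_term _ (fun i => sgn i * z i * z i)) => i.
rewrite /sgn; case: (boolP (neg i)) => hi.
  by rewrite (h0 i hi); lra.
have := Rle_0_sqr (z i); rewrite /Rsqr; lra.
Qed.

Lemma pos_linked u w : (forall i, neg i -> u i = 0) -> (forall i, neg i -> w i = 0) ->
  (forall t, 0 <= t <= 1 -> exists j, ~~ neg j /\ seg u w t j <> 0) -> linked Pset u w.
Proof.
move=> hu hw h t ht.
have [j [hj hz]] := h t ht.
have h0 : forall i, neg i -> seg u w t i = 0.
  by move=> i hi; rewrite /seg (hu i hi) (hw i hi); ring.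
have := Qs_ge_term h0 hj.
have : 0 < seg u w t j * seg u w t j by nra.
rewrite /Pset; lra.
Qed.

Definition sev (c : R) (k : 'I_(p+q)) : pt := fun i => if i == k then c else 0.

Lemma sev_linked c c' k k' : ~~ neg k -> ~~ neg k' -> k != k' -> c <> 0 -> c' <> 0 ->
  linked Pset (sev c k) (sev c' k').
Proof.
move=> hk hk' hkk hc hc'.
apply: pos_linked.
- by move=> i hi; rewrite /sev; case: eqP => // E; subst; rewrite hi in hk.
- by move=> i hi; rewrite /sev; case: eqP => // E; subst; rewrite hi in hk'.
move=> t ht.
case: (Req_dec t 1) => h1.
  have hk'k : (k' == k) = false by rewrite eq_sym; apply: negbTE.
  exists k'; split => //; rewrite /seg /sev eqxx hk'k h1; lra.
exists k; split => //; rewrite /seg /sev eqxx (negbTE hkk).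
have : (1 - t) * c <> 0 by apply: Rmult_integral_contrapositive; split; lra.
lra.
Qed.

Lemma reach_P_base k1 k2 : ~~ neg k1 -> ~~ neg k2 -> k1 != k2 ->
  forall z, Pset z -> reach Pset z (sev 1 k1).
Proof.
move=> h1 h2 h12 z hz.
set z' : pt := fun i => if neg i then 0 else z i.
have hz'0 : forall i, neg i -> z' i = 0 by move=> i hi; rewrite /z' hi.
have l1 : linked Pset z z'.
  move=> t ht; rewrite /Pset.
  apply: Rlt_le_trans hz _.
  apply: sum_le => i; rewrite /sgn /seg /z'.
  case: (neg i); last by lra.
  have := Rle_0_sqr (z i); rewrite /Rsqr; nra.
have [k [hk hzk]] : exists k, ~~ neg k /\ z' k <> 0.
  apply: NNPP => H.
  have : Qs z' = 0.
    rewrite /Qs big1 // => i _.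
    case: (boolP (neg i)) => hi; first by rewrite (hz'0 i hi); ring.
    have : z' i = 0 by apply: NNPP => hh; apply: H; exists i.
    by move=> ->; ring.
  have : Qs z' >= Qs z.
    apply: Rle_ge; apply: sum_le => i; rewrite /sgn /z'.
    case: (neg i); last by lra.
    have := Rle_0_sqr (z i); rewrite /Rsqr; lra.
  rewrite /Pset in hz; lra.
set c := if Rlt_dec 0 (z' k) then 1 else -1.
have hc : c <> 0.
 rewrite /c; case: (Rlt_dec 0 (z' k)) => hh /=; lra.
have l2 : linked Pset z' (sev c k).
  apply: pos_linked => //.
    by move=> i hi; rewrite /sev; case: eqP => // E; subst; rewrite hi in hk.
  move=> t ht; exists k; split => //; rewrite /seg /sev eqxx /c.
  case: (Rlt_dec 0 (z' k)) => hp /=.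
    have : 0 <= (1 - t) * z' k by apply: Rmult_le_pos; lra.
    case: (Req_dec t 0) => ht0; first by subst; lra.
    lra.
  have hn : z' k < 0 by lra.
  have : 0 <= (1 - t) * (- z' k) by apply: Rmult_le_pos; lra.
  case: (Req_dec t 0) => ht0; first by subst; lra.
  lra.
apply: (reach_step l1); apply: (reach_step l2).
case: (eqVneq k k1) => hkk.
  subst k.
  case: (Req_dec c 1) => hc1.
    by rewrite hc1; apply: reach_refl.
  apply: (reach_step (y := sev 1 k2)).
    apply: sev_linked => //; lra.
  apply: (reach_step (y := sev 1 k1)); last by apply: reach_refl.
  apply: sev_linked => //; try lra. by rewrite eq_sym.
apply: (reach_step (y := sev 1 k1)); last by apply: reach_refl.
by apply: sev_linked => //; lra.
Qed.

Lemma conn_Ptranslate k1 k2 a : ~~ neg k1 -> ~~ neg k2 -> k1 != k2 ->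
  conn_piece (translate a Pset).
Proof.
move=> h1 h2 h12; apply: (conn_translate (b := sev 1 k1)).
  apply: Rlt_le_trans (Qs_ge_term _ h1).
    by rewrite /sev eqxx; lra.
  by move=> i hi; rewrite /sev; case: eqP => // E; subst; rewrite hi in h1.
exact: (reach_P_base h1 h2 h12).
Qed.

End Conn.

End MC.
Import MC.

Module MD.
Local Open Scope R_scope.
Set Implicit Arguments. Unset Strict Implicit.

Lemma large_ex Y c Q : Y > 0 -> exists M, M > 0 /\ forall m, m >= M -> Y * m * m - 2 * m * c + Q > 0.
Proof.
move=> hY.
exists ((2 * Rabs c + Rabs Q + 1) / Y + 1); split.
  have : 0 < (2 * Rabs c + Rabs Q + 1) / Y.
    apply: Rdiv_lt_0_compat => //; have := Rabs_pos c; have := Rabs_pos Q; lra.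
  lra.
move=> m hm.
have h1 : (2 * Rabs c + Rabs Q + 1) / Y * Y = 2 * Rabs c + Rabs Q + 1 by field; lra.
have hm0 : 0 < (2 * Rabs c + Rabs Q + 1) / Y.
  apply: Rdiv_lt_0_compat => //; have := Rabs_pos c; have := Rabs_pos Q; lra.
have hYm : Y * m >= 2 * Rabs c + Rabs Q + 1.
  have e : Y * m - (2 * Rabs c + Rabs Q + 1) = Y * (m - (2 * Rabs c + Rabs Q + 1) / Y) by field; lra.
  have : 0 <= Y * (m - (2 * Rabs c + Rabs Q + 1) / Y) by apply: Rmult_le_pos; lra.
  lra.
have hc : c <= Rabs c by apply: Rle_abs.
have hQ : - Q <= Rabs Q by rewrite -Rabs_Ropp; apply: Rle_abs.
have hm1 : m >= 1 by lra.
have : Y * m * m >= (2 * Rabs c + Rabs Q + 1) * m.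
  apply: Rle_ge; apply: Rmult_le_compat_r; lra.
have : 2 * m * c <= 2 * m * Rabs c.
  apply: Rmult_le_compat_l; lra.
have : Rabs Q * m >= Rabs Q by have := Rabs_pos Q; nra.
lra.
Qed.

Section Geo.
Variables p q : nat.
Notation pt := (pt p q).
Implicit Types v w x y d a b : pt.

Lemma qform_lc (r : R) x (s : R) y : qform (lc r x s y) = r * r * qform x + 2 * r * s * bform x y + s * s * qform y.
Proof.
rewrite /qform bform_lc !bform_lcl (bform_sym y x); ring.
Qed.

Lemma mem_translate (P : pset p q) a z : translate a P z <-> P (lc 1 z (-1) a).
Proof.
split.
  move=> [u [hu ->]].
  have -> : lc 1 (vadd a u) (-1) a = u.
    by apply: functional_extensionality => i; rewrite /lc /vadd; ring.
  done.
move=> h; exists (lc 1 z (-1) a); split => //.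
by apply: functional_extensionality => i; rewrite /lc /vadd; ring.
Qed.

Definition xpart v : pt := fun i => if (i < p)%N then v i else 0.
Definition ypart v : pt := fun i => if (i < p)%N then 0 else v i.
Definition Xs v := \big[Rplus/0]_(i < p + q) (if (i < p)%N then v i * v i else 0).
Definition Ys v := \big[Rplus/0]_(i < p + q) (if (i < p)%N then 0 else v i * v i).

Lemma eip_XY v : eip v v = Xs v + Ys v.
Proof.
rewrite /eip /Xs /Ys.
have := @sum_lin _ 1 1 (fun i => if (i < p)%N then v i * v i else 0)
                         (fun i => if (i < p)%N then 0 else v i * v i).
rewrite !Rmult_1_l => <-; apply: sum_ext => i; case: (i < p)%N; ring.
Qed.

Lemma qform_XY v : qform v = - Xs v + Ys v.
Proof.
transitivity (-1 * Xs v + 1 * Ys v); last ring.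
rewrite /Xs /Ys -sum_lin /qform /bform; apply: sum_ext => i; case: (i < p)%N; ring.
Qed.

Lemma bform_ypart v : bform v (ypart v) = Ys v.
Proof. rewrite /bform /Ys; apply: sum_ext => i; rewrite /ypart; case: (i < p)%N; ring. Qed.
Lemma qform_ypart v : qform (ypart v) = Ys v.
Proof. rewrite /qform /bform /Ys; apply: sum_ext => i; rewrite /ypart; case: (i < p)%N; ring. Qed.
Lemma bform_xpart v : bform v (smul (-1) (xpart v)) = Xs v.
Proof. rewrite /bform /Xs; apply: sum_ext => i; rewrite /xpart /smul; case: (i < p)%N; ring. Qed.
Lemma qform_xpart v : qform (smul (-1) (xpart v)) = - Xs v.
Proof.
transitivity (-1 * Xs v + 0 * Xs v); last ring.
rewrite /Xs -sum_lin /qform /bform; apply: sum_ext => i; rewrite /xpart /smul; case: (i < p)%N; ring.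
Qed.

Lemma cone_XY v : cone v -> v <> @vzero p q -> Xs v > 0 /\ Ys v > 0.
Proof.
move=> hc hv; have := eip_pos hv; rewrite eip_XY; have := qform_XY v.
rewrite /cone in hc; rewrite hc; lra.
Qed.

Lemma bform_sev d (c : R) (k : 'I_(p+q)) : bform d (sev c k) = c * @sg p q k * d k.
Proof.
have -> : sev c k = smul c (ev k).
  by apply: functional_extensionality => i; rewrite /sev /smul /ev; case: (i == k); ring.
rewrite bform_smul bform_ev; ring.
Qed.

Lemma qform_sev (c : R) (k : 'I_(p+q)) : qform (sev c k) = @sg p q k * c * c.
Proof. rewrite /qform bform_sev /sev eqxx; ring. Qed.

End Geo.

End MD.
Import MD.

Module ME.
Local Open Scope R_scope.
Set Implicit Arguments. Unset Strict Implicit.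

Lemma two_large Y1 c1 Q1 Y2 c2 Q2 : Y1 > 0 -> Y2 > 0 -> exists m, m > 0 /\
  Y1 * m * m - 2 * m * c1 + Q1 > 0 /\ Y2 * m * m - 2 * m * c2 + Q2 > 0.
Proof.
move=> h1 h2.
have [M1 [hM1 H1]] := large_ex c1 Q1 h1.
have [M2 [hM2 H2]] := large_ex c2 Q2 h2.
exists (Rmax M1 M2); split; first by have := Rmax_l M1 M2; lra.
split; [apply: H1; have := Rmax_l M1 M2 | apply: H2; have := Rmax_r M1 M2]; lra.
Qed.

Section Inter.
Variables p q : nat.
Notation pt := (pt p q).
Implicit Types v w x y d a b : pt.

Lemma qform_smul (m : R) w : qform (smul m w) = m * m * qform w.
Proof. rewrite /qform bform_smul bform_smull; ring. Qed.

Lemma sg_lt (k : 'I_(p+q)) : (k < p)%N -> @sg p q k = -1.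
Proof. by rewrite /sg => ->. Qed.
Lemma sg_ge (k : 'I_(p+q)) : ~~ (k < p)%N -> @sg p q k = 1.
Proof. by rewrite /sg => /negbTE ->. Qed.

Lemma US_lc a z : translate a (@US p q) z <-> qform (lc 1 z (-1) a) > 0.
Proof. exact: mem_translate. Qed.
Lemma UT_lc a z : translate a (@UT p q) z <-> qform (lc 1 z (-1) a) < 0.
Proof. exact: mem_translate. Qed.

Lemma qform_diff z a : qform (lc 1 z (-1) a) = qform z - 2 * bform z a + qform a.
Proof. rewrite qform_lc; ring. Qed.

Lemma inter_USUS a b : (0 < q)%N -> exists z, translate a (@US p q) z /\ translate b (@US p q) z.
Proof.
move=> hq.
have hk : (p < p + q)%N by rewrite -{1}(addn0 p) ltn_add2l.
set k := Ordinal hk.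
have sk : @sg p q k = 1 by apply: sg_ge; rewrite /= ltnn.
have [m [hm [H1 H2]]] := two_large (a k) (qform a) (b k) (qform b) Rlt_0_1 Rlt_0_1.
exists (sev m k); rewrite !US_lc !qform_diff qform_sev !(bform_sym (sev m k)) !bform_sev sk.
split; lra.
Qed.

Lemma inter_UTUT a b : (0 < p)%N -> exists z, translate a (@UT p q) z /\ translate b (@UT p q) z.
Proof.
move=> hp.
have hk : (0 < p + q)%N by apply: leq_trans hp (leq_addr _ _).
set k := Ordinal hk.
have sk : @sg p q k = -1 by apply: sg_lt.
have [m [hm [H1 H2]]] := two_large (a k) (- qform a) (b k) (- qform b) Rlt_0_1 Rlt_0_1.
exists (sev m k); rewrite !UT_lc !qform_diff qform_sev !(bform_sym (sev m k)) !bform_sev sk.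
split; lra.
Qed.

Lemma inter_USH a v alpha : cone v -> v <> @vzero p q ->
  exists z, translate a (@US p q) z /\ Hset v alpha z.
Proof.
move=> hc hv; have [hX hY] := cone_XY hc hv.
have [M [hM H]] := large_ex (bform (ypart v) a) (qform a) hY.
set m := Rmax M (Rabs alpha / Ys v + 1).
have hm1 : m >= M by have := Rmax_l M (Rabs alpha / Ys v + 1); rewrite -/m; lra.
have hm2 : m >= Rabs alpha / Ys v + 1 by have := Rmax_r M (Rabs alpha / Ys v + 1); rewrite -/m; lra.
exists (smul m (ypart v)); rewrite US_lc qform_diff qform_smul bform_smull qform_ypart /Hset bform_smul bform_ypart.
split; first by have := H m hm1; lra.
have : m * Ys v >= (Rabs alpha / Ys v + 1) * Ys v by apply: Rle_ge; apply: Rmult_le_compat_r; lra.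
have -> : (Rabs alpha / Ys v + 1) * Ys v = Rabs alpha + Ys v by field; lra.
have := Rle_abs alpha; lra.
Qed.

Lemma inter_UTH a v alpha : cone v -> v <> @vzero p q ->
  exists z, translate a (@UT p q) z /\ Hset v alpha z.
Proof.
move=> hc hv; have [hX hY] := cone_XY hc hv.
set w := smul (-1) (xpart v).
have [M [hM H]] := large_ex (- bform w a) (- qform a) hX.
set m := Rmax M (Rabs alpha / Xs v + 1).
have hm1 : m >= M by have := Rmax_l M (Rabs alpha / Xs v + 1); rewrite -/m; lra.
have hm2 : m >= Rabs alpha / Xs v + 1 by have := Rmax_r M (Rabs alpha / Xs v + 1); rewrite -/m; lra.
exists (smul m w); rewrite UT_lc qform_diff qform_smul bform_smull qform_xpart /Hset bform_smul bform_xpart.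
split; first by have := H m hm1; lra.
have : m * Xs v >= (Rabs alpha / Xs v + 1) * Xs v by apply: Rle_ge; apply: Rmult_le_compat_r; lra.
have -> : (Rabs alpha / Xs v + 1) * Xs v = Rabs alpha + Xs v by field; lra.
have := Rle_abs alpha; lra.
Qed.

End Inter.

End ME.
Import ME.

Module MF.
Local Open Scope R_scope.
Set Implicit Arguments. Unset Strict Implicit.

Lemma arith1 Q A B S : Q + 2 * ((S + (A + B) / 2) * A + S * B) + (1 * S * S - 1 * (S + (A + B) / 2) * (S + (A + B) / 2))
  = Q + S * (A + B) + (A + B) * A - (A + B) * (A + B) / 4.
Proof. field. Qed.

Section Inter2.
Variables p q : nat.
Notation pt := (pt p q).
Implicit Types v w x y d a b : pt.

Lemma ex_neq (a b : pt) : a <> b -> exists i, a i <> b i.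
Proof.
move=> h; apply: NNPP => H; apply: h; apply: functional_extensionality => i.
by apply: NNPP => h2; apply: H; exists i.
Qed.

Lemma inter_USUT a b : (0 < p)%N -> (0 < q)%N -> a <> b ->
  exists z, translate a (@US p q) z /\ translate b (@UT p q) z.
Proof.
move=> hp hq hab.
set d := lc 1 b (-1) a.
have [i0 hi0] : exists i, d i <> 0.
  have [i hi] := ex_neq hab; exists i; rewrite /d /lc; lra.
have hkp : (p < p + q)%N by rewrite -{1}(addn0 p) ltn_add2l.
have h0 : (0 < p + q)%N by apply: leq_trans hp (leq_addr _ _).
have [j [k [hj [hk [hjk hD]]]]] : exists j k : 'I_(p+q), (j < p)%N /\ ~~ (k < p)%N /\
   j != k /\ Rabs (d j) + Rabs (d k) > 0.
  case: (boolP (i0 < p)%N) => hi.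
    exists i0, (Ordinal hkp); split => //; split; first by rewrite /= ltnn.
    split; first by apply/eqP => E; move: hi; rewrite E /= ltnn.
    have := Rabs_pos (d (Ordinal hkp)); have := Rabs_pos_lt _ hi0; lra.
  exists (Ordinal h0), i0; split => //; split => //.
  split; first by apply/eqP => E; move: hi; rewrite -E /= hp.
  have := Rabs_pos (d (Ordinal h0)); have := Rabs_pos_lt _ hi0; lra.
have sj := sg_lt hj. have sk := sg_ge hk.
set sig := if Rle_dec 0 (d j) then -1 else 1.
set rho := if Rle_dec 0 (d k) then 1 else -1.
have hsig : sig * d j = - Rabs (d j) /\ sig * sig = 1.
  rewrite /sig; case: (Rle_dec 0 (d j)) => h /=.
    by rewrite Rabs_right; [split; ring | lra].
  by rewrite Rabs_left; [split; ring | lra].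
have hrho : rho * d k = Rabs (d k) /\ rho * rho = 1.
  rewrite /rho; case: (Rle_dec 0 (d k)) => h /=.
    by rewrite Rabs_right; [split; ring | lra].
  by rewrite Rabs_left; [split; ring | lra].
set D := Rabs (d j) + Rabs (d k).
have hD0 : D > 0 by exact: hD.
set S := (Rabs (qform d) + D * D / 4 + 1) / D.
have hSD : S * D = Rabs (qform d) + D * D / 4 + 1 by rewrite /S; field; lra.
have hS : S > 0.
  rewrite /S; apply: Rdiv_lt_0_compat => //.
  have := Rabs_pos (qform d); have : 0 <= D * D by nra. lra.
set t := S + D / 2.
set w := lc (sig * t) (ev j) (rho * S) (ev k).
set u := lc 1 d 1 w.
have hqej : qform (ev j) = -1 by rewrite (qform_sev 1 j) sj; ring.
have hqek : qform (ev k) = 1 by rewrite (qform_sev 1 k) sk; ring.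
have hbjk : bform (ev j) (ev k) = 0.
  by rewrite (bform_sev _ 1 k) /ev eq_sym (negbTE hjk); ring.
have hqw : qform w = rho * rho * S * S - sig * sig * t * t.
  rewrite /w qform_lc hqej hqek hbjk; ring.
have hbdw : bform d w = t * Rabs (d j) + S * Rabs (d k).
  rewrite /w bform_lc (bform_sev _ 1 j) (bform_sev _ 1 k) sj sk.
  case: hsig => [h1 _]; case: hrho => [h2 _].
  transitivity (- (t * (sig * d j)) + S * (rho * d k)); first ring.
  rewrite h1 h2; ring.
have hqu : qform u = qform d + 2 * bform d w + qform w.
  by rewrite /u qform_lc; ring.
exists (lc 1 a 1 u); split.
  rewrite US_lc.
  have -> : lc 1 (lc 1 a 1 u) (-1) a = u.
    by apply: functional_extensionality => i; rewrite /lc; ring.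
  rewrite hqu hbdw hqw.
  case: hsig => [_ ->]; case: hrho => [_ ->].
  have e : qform d + 2 * (t * Rabs (d j) + S * Rabs (d k)) + (1 * S * S - 1 * t * t)
     = qform d + S * D + D * Rabs (d j) - D * D / 4.
    rewrite /t /D; exact: arith1.
  rewrite e.
  have := Rabs_pos (d j); have := Rle_abs (- qform d); rewrite Rabs_Ropp.
  have : 0 <= D * Rabs (d j) by apply: Rmult_le_pos; [lra | apply: Rabs_pos].
  lra.
rewrite UT_lc.
have -> : lc 1 (lc 1 a 1 u) (-1) b = w.
  by apply: functional_extensionality => i; rewrite /u /d /lc; ring.
rewrite hqw; case: hsig => [_ ->]; case: hrho => [_ ->].
rewrite /t.
have : 0 < D by [].
nra.
Qed.

Lemma eip_sym x y : eip x y = eip y x.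
Proof. rewrite /eip; apply: sum_ext => i; ring. Qed.
Lemma eip_lc x (r : R) y (s : R) z : eip x (lc r y s z) = r * eip x y + s * eip x z.
Proof. rewrite /eip -sum_lin; apply: sum_ext => i; rewrite /lc; ring. Qed.

Lemma inter_HH v w alpha beta : v <> @vzero p q -> w <> @vzero p q ->
  ~ (exists c, c < 0 /\ w = smul c v) ->
  exists z, Hset v alpha z /\ Hset w beta z.
Proof.
move=> hv hw hn.
have hvv := eip_pos hv.
set lam := eip v w / eip v v.
set u := lc 1 w (- lam) v.
have hvu : eip v u = 0.
  rewrite /u eip_lc /lam; field; lra.
have hwu : eip w u = eip u u.
  transitivity (eip u w); first by rewrite eip_sym.
  have -> : eip u u = eip u (lc 1 w (- lam) v) by [].
  rewrite eip_lc (eip_sym u v) hvu; ring.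
case: (classic (u = @vzero p q)) => hu.
  have hwl : w = smul lam v.
    apply: functional_extensionality => i.
    have : u i = 0 by rewrite hu.
    rewrite /u /lc /smul; lra.
  have hl : lam > 0.
    case: (Rtotal_order lam 0) => [hl|[hl|hl]] //.
    - by exfalso; apply: hn; exists lam.
    - exfalso; apply: hw; rewrite hwl hl.
      by apply: functional_extensionality => i; rewrite /smul /vzero; ring.
  set K := Rabs alpha + Rabs beta / lam + 1.
  exists (smul (K / eip v v) (Jf v)); rewrite /Hset !bform_smul !bform_J.
  have e1 : K / eip v v * eip v v = K by field; lra.
  rewrite e1 hwl.
  have -> : eip (smul lam v) v = lam * eip v v.
    rewrite /eip /smul -[X in _ = X]Rmult_1_r.
    have := @sum_lin _ lam 0 (fun i => v i * v i) (fun i => v i * v i).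
    rewrite Rmult_0_l Rplus_0_r => <-. rewrite Rmult_1_r.
    by apply: sum_ext => i; ring.
  have -> : K / eip v v * (lam * eip v v) = lam * K by field; lra.
  rewrite /K; split.
    have := Rle_abs alpha; have : 0 <= Rabs beta / lam.
      by rewrite /Rdiv; apply: Rmult_le_pos; [apply: Rabs_pos | left; apply: Rinv_0_lt_compat; lra].
    lra.
  have -> : lam * (Rabs alpha + Rabs beta / lam + 1) = lam * Rabs alpha + Rabs beta + lam by field; lra.
  have := Rle_abs beta; have : 0 <= lam * Rabs alpha by apply: Rmult_le_pos; [lra | apply: Rabs_pos].
  lra.
have huu := eip_pos hu.
set s := (Rabs alpha + 1) / eip v v.
set t := (Rabs beta + 1 + Rabs (s * eip w v)) / eip u u.
exists (lc s (Jf v) t (Jf u)); rewrite /Hset !bform_lc !bform_J hvu hwu.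
have e1 : s * eip v v = Rabs alpha + 1 by rewrite /s; field; lra.
have e2 : t * eip u u = Rabs beta + 1 + Rabs (s * eip w v) by rewrite /t; field; lra.
rewrite e1 e2; split.
  have := Rle_abs alpha; lra.
have := Rle_abs beta; have := Rle_abs (- (s * eip w v)); rewrite Rabs_Ropp; lra.
Qed.

End Inter2.

End MF.
Import MF.

Module MG.
Local Open Scope R_scope.
Set Implicit Arguments. Unset Strict Implicit.

Section Pieces.
Variables p q : nat.
Hypotheses (hp : (2 <= p)%N) (hq : (2 <= q)%N).
Notation pt := (pt p q).
Implicit Types v w x y d a b : pt.

Lemma conn_US a : conn_piece (translate a (@US p q)).
Proof.
have h1 : (p < p + q)%N by rewrite -{1}(addn0 p) ltn_add2l; apply: leq_trans hq.
have h2 : (p.+1 < p + q)%N by rewrite -addn1 ltn_add2l.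
have := @conn_Ptranslate p q (fun i => (i < p)%N) (Ordinal h1) (Ordinal h2) a.
apply => /=; rewrite ?ltnn //.
  by rewrite -leqNgt leqnSn.
by rewrite -val_eqE /= ltn_eqF.
Qed.

Lemma conn_UT a : conn_piece (translate a (@UT p q)).
Proof.
have h1 : (0 < p + q)%N by apply: leq_trans (ltnW hp) (leq_addr q p).
have h2 : (1 < p + q)%N by apply: leq_trans hp (leq_addr q p).
have H : conn_piece (translate a (Pset (fun i : 'I_(p+q) => ~~ (i < p)%N))).
  apply: (@conn_Ptranslate p q (fun i => ~~ (i < p)%N) (Ordinal h1) (Ordinal h2) a) => /=;
  rewrite ?negbK //; by apply: ltnW.
apply: conn_set_eq H => z; rewrite !mem_translate /UT /Pset.
have -> : Qs (fun i : 'I_(p+q) => ~~ (i < p)%N) (lc 1 z (-1) a) = - qform (lc 1 z (-1) a).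
  transitivity (-1 * qform (lc 1 z (-1) a) + 0 * qform (lc 1 z (-1) a)); last ring.
  rewrite /qform /bform -sum_lin /Qs; apply: sum_ext => i; rewrite /sgn.
  case: (i < p)%N => /=; ring.
split; lra.
Qed.

Lemma conn_int W : intersection_type W -> (exists x, W x) -> conn_piece W.
Proof.
move=> [[a ha]|[[a ha]|[v [al [_ [_ ha]]]]]] hne.
- by apply: (conn_set_eq ha); apply: conn_US.
- by apply: (conn_set_eq ha); apply: conn_UT.
- apply: (conn_set_eq ha); apply: conn_H.
  by case: hne => x /ha hx; exists x.
Qed.

Lemma hp0 : (0 < p)%N. Proof. by apply: leq_trans hp. Qed.
Lemma hq0 : (0 < q)%N. Proof. by apply: leq_trans hq. Qed.

Lemma disj_US X Y a : set_eq X (translate a (@US p q)) -> intersection_type Y ->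
  (forall z, X z -> Y z -> False) -> set_eq Y (translate a (@UT p q)).
Proof.
move=> hX [[b hb]|[[b hb]|[v [al [hc [hv hb]]]]]] hd.
- have [z [z1 z2]] := inter_USUS a b hq0.
  by exfalso; apply: (hd z); [apply/hX | apply/hb].
- case: (classic (a = b)) => hab; first by rewrite hab.
  have [z [z1 z2]] := inter_USUT hp0 hq0 hab.
  by exfalso; apply: (hd z); [apply/hX | apply/hb].
- have [z [z1 z2]] := inter_USH a al hc hv.
  by exfalso; apply: (hd z); [apply/hX | apply/hb].
Qed.

Lemma disj_UT X Y a : set_eq X (translate a (@UT p q)) -> intersection_type Y ->
  (forall z, X z -> Y z -> False) -> set_eq Y (translate a (@US p q)).
Proof.
move=> hX [[b hb]|[[b hb]|[v [al [hc [hv hb]]]]]] hd.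
- case: (classic (b = a)) => hab; first by rewrite -hab.
  have [z [z1 z2]] := inter_USUT hp0 hq0 hab.
  by exfalso; apply: (hd z); [apply/hX | apply/hb].
- have [z [z1 z2]] := inter_UTUT a b hp0.
  by exfalso; apply: (hd z); [apply/hX | apply/hb].
- have [z [z1 z2]] := inter_UTH a al hc hv.
  by exfalso; apply: (hd z); [apply/hX | apply/hb].
Qed.

Lemma disj_H X Y v al : set_eq X (Hset v al) -> cone v -> v <> @vzero p q ->
  intersection_type Y -> (forall z, X z -> Y z -> False) ->
  exists c w be, c < 0 /\ w = smul c v /\ set_eq Y (Hset w be).
Proof.
move=> hX hcv hv [[b hb]|[[b hb]|[w [be [hc [hw hb]]]]]] hd.
- have [z [z1 z2]] := inter_USH b al hcv hv.
  by exfalso; apply: (hd z); [apply/hX | apply/hb].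
- have [z [z1 z2]] := inter_UTH b al hcv hv.
  by exfalso; apply: (hd z); [apply/hX | apply/hb].
- case: (classic (exists c, c < 0 /\ w = smul c v)) => [[c [hc0 hwc]]|hn].
    by exists c, w, be.
  have [z [z1 z2]] := inter_HH al be hv hw hn.
  by exfalso; apply: (hd z); [apply/hX | apply/hb].
Qed.

End Pieces.

End MG.
Import MG.

Module MH.
Local Open Scope R_scope.
Set Implicit Arguments. Unset Strict Implicit.

Lemma chain_mono l (alpha : 'I_l -> R) (k0 : nat) :
  (forall i j : 'I_l, nat_of_ord j = (nat_of_ord i).+1 ->
     if (nat_of_ord j == k0)%N then alpha i >= alpha j else alpha i > alpha j) ->
  forall i j : 'I_l, (i <= j)%N -> alpha j <= alpha i.
Proof.
move=> H.
suff S : forall d (i j : 'I_l), nat_of_ord j = (i + d)%N -> alpha j <= alpha i.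
  move=> i j hij; apply: (S (j - i)%N); by rewrite subnKC.
elim=> [|d IH] i j hj.
  have -> : j = i by apply: val_inj; rewrite /= hj addn0.
  lra.
have hlt : (i + d < l)%N.
  have h0 : (i + d < j)%N by rewrite hj addnS ltnSn.
  exact: ltn_trans h0 (ltn_ord j).
have h1 := IH i (Ordinal hlt) erefl.
have := H (Ordinal hlt) j; rewrite hj addnS => /(_ erefl).
case: (_ == _) => /=; lra.
Qed.

Lemma ord2_cases (i j k : 'I_2) : i <> j -> k = i \/ k = j.
Proof.
move: i j k => [[|[|?]] hi] [[|[|?]] hj] [[|[|?]] hk] //= hij;
  try (by left; apply: val_inj); try (by right; apply: val_inj);
  by exfalso; apply: hij; apply: val_inj.
Qed.

Section Back.
Variables p q l : nat.
Variable W : 'I_l -> pset p q.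
Hypotheses (hne : forall i, exists x, W i x) (hopen : forall i, is_open (W i)).

Lemma back1 (v : pt p q) (alpha : 'I_l -> R) (k0 : nat) (sigma : 'I_l -> 'I_l) :
  (1 <= k0)%N -> (k0 <= l - 1)%N -> bijective sigma ->
  (forall i j : 'I_l, nat_of_ord j = (nat_of_ord i).+1 ->
     if (nat_of_ord j == k0)%N then alpha i >= alpha j else alpha i > alpha j) ->
  (forall i : 'I_l, if (i < k0)%N then set_eq (W (sigma i)) (Hset v (alpha i))
          else set_eq (W (sigma i)) (Hset (vopp v) (- alpha i))) ->
  ~ is_connected (union_fam W).
Proof.
move=> hk1 hk2 [g hsg hgs] hcons hW.
have hmono := chain_mono hcons.
have hl1 : (1 < l)%N by have h := leq_trans hk1 hk2; rewrite subn_gt0 in h.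
have hl0 : (0 < l)%N by apply: ltnW.
have hkl : (k0 < l)%N by apply: leq_ltn_trans hk2 _; rewrite subn1 ltn_predL.
move=> hc; apply: hc.
exists (fun x => exists i : 'I_l, (i < k0)%N /\ W (sigma i) x),
       (fun x => exists i : 'I_l, ~~ (i < k0)%N /\ W (sigma i) x).
split.
  move=> x [i [hi hx]]; have [eps [he hb]] := hopen hx.
  by exists eps; split => // y hy; exists i; split => //; apply: hb.
split.
  move=> x [i [hi hx]]; have [eps [he hb]] := hopen hx.
  by exists eps; split => // y hy; exists i; split => //; apply: hb.
split.
  move=> x [k hx]; rewrite -(hgs k) in hx.
  case: (boolP (g k < k0)%N) => h; [left|right]; by exists (g k).
split.
  have [x hx] := hne (sigma (Ordinal hl0)).
  exists x; split; first by exists (sigma (Ordinal hl0)).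
  by exists (Ordinal hl0); split.
split.
  have [x hx] := hne (sigma (Ordinal hkl)).
  exists x; split; first by exists (sigma (Ordinal hkl)).
  by exists (Ordinal hkl); split => //=; rewrite ltnn.
move=> x _ [i [hi hxi]] [j [hj hxj]].
have := hW i; rewrite hi => /(_ x) [/(_ hxi) h1 _].
have := hW j; rewrite (negbTE hj) => /(_ x) [/(_ hxj) h2 _].
rewrite /Hset bform_opp in h1 h2.
have hij : (i <= j)%N.
  apply: ltnW; apply: leq_trans hi _; by rewrite leqNgt.
have := hmono i j hij; lra.
Qed.

Lemma back2 (i j : 'I_l) (v : pt p q) : l = 2%N -> i <> j ->
  set_eq (W i) (translate v (@US p q)) -> set_eq (W j) (translate v (@UT p q)) ->
  ~ is_connected (union_fam W).
Proof.
move=> hl hij hi hj hc; apply: hc.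
exists (W i), (W j); split => //; split => //.
split.
  move=> x [k hk].
  subst l; case: (ord2_cases k hij) => E; subst k; by [left | right].
split; first by have [x hx] := hne i; exists x; split => //; exists i.
split; first by have [x hx] := hne j; exists x; split => //; exists j.
move=> x _ /hi h1 /hj h2.
move: h1 h2; rewrite !mem_translate /US /UT; lra.
Qed.

End Back.

End MH.
Import MH.

Module MI.
Set Implicit Arguments. Unset Strict Implicit.

Lemma nat_aux a b c : a <= c -> b < c - a -> a + b < c.
Proof. by move=> hac hb; rewrite -(ltn_add2l a) subnKC in hb. Qed.

Section Rank.
Variable l : nat.
Variable sb : 'I_l -> bool.
Variable be : 'I_l -> R.
Hypotheses
  (hcross : forall s t, sb s -> ~~ sb t -> Rle (be t) (be s))
  (hdS : forall s s', sb s -> sb s' -> s <> s' -> be s <> be s')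
  (hdT : forall t t', ~~ sb t -> ~~ sb t' -> t <> t' -> be t <> be t')
  (hS : exists s, sb s) (hT : exists t, ~~ sb t).

Definition gtb (i x : 'I_l) : bool := if Rlt_dec (be i) (be x) then true else false.
Lemma gtbP i x : gtb i x = true <-> Rlt (be i) (be x).
Proof. by rewrite /gtb; case: Rlt_dec. Qed.

Definition SS := [set x | sb x].
Definition k0 := #|SS|.
Definition rank (i : 'I_l) : nat :=
  if sb i then #|[set x | sb x && gtb i x]| else k0 + #|[set x | ~~ sb x && gtb i x]|.

Lemma gtb_irr i : gtb i i = false.
Proof. by apply/negbTE/negP => /gtbP; lra. Qed.

Lemma card_notS : #|[set x | ~~ sb x]| = l - k0.
Proof.
have h : #|SS| + #|~: SS| = l by rewrite cardsC card_ord.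
have e : #|[set x | ~~ sb x]| = #|~: SS| by apply: eq_card => x; rewrite !inE.
rewrite e /k0; move: h; move: (#|SS|) (#|~: SS|) => a b.
by move=> <-; rewrite addKn.
Qed.

Lemma rank_S i : sb i -> rank i < k0.
Proof.
move=> hi; rewrite /rank hi; apply: proper_card; apply/properP; split.
  by apply/subsetP => x; rewrite !inE => /andP[].
by exists i; rewrite !inE ?hi // gtb_irr andbF.
Qed.

Lemma rank_T i : ~~ sb i -> k0 <= rank i < l.
Proof.
move=> hi; rewrite /rank (negbTE hi) leq_addr /=.
have hk : k0 <= l by have := max_card SS; rewrite card_ord.
have : #|[set x | ~~ sb x && gtb i x]| < l - k0.
  rewrite -card_notS; apply: proper_card; apply/properP; split.
    by apply/subsetP => x; rewrite !inE => /andP[].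
  by exists i; rewrite !inE ?hi // gtb_irr andbF.
move=> h; exact: nat_aux hk h.
Qed.

Lemma rank_lt i : rank i < l.
Proof.
case: (boolP (sb i)) => hi; last by case/andP: (rank_T hi).
apply: leq_trans (rank_S hi) _.
by have := max_card SS; rewrite card_ord.
Qed.

Lemma rank_side i : sb i = (rank i < k0).
Proof.
case: (boolP (sb i)) => hi; first by rewrite rank_S.
by case/andP: (rank_T hi); rewrite leqNgt => /negbTE ->.
Qed.

Lemma rank_mono x y : sb x = sb y -> Rlt (be y) (be x) -> rank x < rank y.
Proof.
move=> hxy hlt.
have hsub : forall b : bool, [set z | (sb z == b) && gtb x z] \proper [set z | (sb z == b) && gtb y z]
   -> True by [].
rewrite /rank -hxy.
have key : forall b : bool, sb x = b ->
  #|[set z | (sb z == b) && gtb x z]| < #|[set z | (sb z == b) && gtb y z]|.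
  move=> b hb; apply: proper_card; apply/properP; split.
    apply/subsetP => z; rewrite !inE => /andP[-> /gtbP h] /=.
    by apply/gtbP; lra.
  exists x; first by rewrite !inE hb eqxx /=; apply/gtbP.
  by rewrite !inE gtb_irr andbF.
case: (boolP (sb x)) => hx.
  have := key true hx.
  have e1 : forall w, [set z | (sb z == true) && gtb w z] = [set z | sb z && gtb w z].
    by move=> w; apply/setP => z; rewrite !inE eqb_id.
  by rewrite !e1.
have := key false (negbTE hx).
have e1 : forall w, [set z | (sb z == false) && gtb w z] = [set z | ~~ sb z && gtb w z].
  by move=> w; apply/setP => z; rewrite !inE eqbF_neg.
by rewrite !e1 ltn_add2l.
Qed.

Lemma rank_inj : injective rank.
Proof.
move=> x y hxy; apply: NNPP => hne.
have hs : sb x = sb y by rewrite !rank_side hxy.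
have hbe : be x <> be y.
  case: (boolP (sb x)) => hx.
    by apply: hdS => //; rewrite -hs.
  by apply: hdT => //; rewrite -hs.
case: (Rtotal_order (be x) (be y)) => [h|[h|h]] //.
  by have := rank_mono (esym hs) h; rewrite hxy ltnn.
by have := rank_mono hs h; rewrite hxy ltnn.
Qed.

Definition rk (i : 'I_l) : 'I_l := Ordinal (rank_lt i).

Lemma rk_inj : injective rk.
Proof. by move=> x y /(congr1 val) /= /rank_inj. Qed.

Lemma rank_result : exists (alpha : 'I_l -> R) (k : nat) (sigma : 'I_l -> 'I_l),
  (1 <= k)%N /\ (k <= l - 1)%N /\ bijective sigma /\
  (forall i j : 'I_l, nat_of_ord j = (nat_of_ord i).+1 ->
     if (nat_of_ord j == k)%N then Rge (alpha i) (alpha j) else Rgt (alpha i) (alpha j)) /\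
  (forall i : 'I_l, alpha i = be (sigma i) /\ sb (sigma i) = (i < k)%N).
Proof.
have [g hrg hgr] : bijective rk by apply: injF_bij; apply: rk_inj.
have hpos : forall i, rank (g i) = i by move=> i; rewrite -[in RHS](hgr i).
have hside : forall i, sb (g i) = (i < k0) by move=> i; rewrite rank_side hpos.
exists (fun i => be (g i)), k0, g.
split.
  by case: hS => s hs; apply: leq_ltn_trans (leq0n _) (rank_S hs).
split.
  case: hT => t ht; case/andP: (rank_T ht) => h1 h2.
  have h3 := leq_ltn_trans h1 h2.
  rewrite subn1 -ltnS prednK //; apply: leq_ltn_trans (leq0n _) h3.
split; first by exists rk.
split; last by move=> i; split => //; rewrite hside.
move=> i j hij.
case: eqP => hj.
  have hsi : sb (g i) by rewrite hside -ltnS -hij hj.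
  have hsj : ~~ sb (g j) by rewrite hside hj ltnn.
  by apply: Rle_ge; apply: hcross.
have hs : sb (g i) = sb (g j).
  rewrite !hside hij; apply/idP/idP => h.
    rewrite ltn_neqAle h andbT; apply/eqP => E; apply: hj; by rewrite hij.
  by apply: ltn_trans (ltnSn i) h.
have hne : g i <> g j.
  move=> E; have := congr1 val (congr1 rk E); rewrite /= !hpos hij.
  by move/eqP; rewrite eqn_leq ltnn andbF.
have hbe : be (g i) <> be (g j).
  case: (boolP (sb (g i))) => hx.
    by apply: hdS => //; rewrite -hs.
  by apply: hdT => //; rewrite -hs.
case: (Rtotal_order (be (g i)) (be (g j))) => [h|[h|h]] //.
have := rank_mono (esym hs) h; rewrite !hpos hij ltnNge => /negP; case.
by apply: leqnSn.
Qed.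

End Rank.

End MI.
Import MI.

Module MJ.
Local Open Scope R_scope.
Set Implicit Arguments. Unset Strict Implicit.

Section Aux.
Variables p q : nat.
Notation pt := (pt p q).

Lemma set_eq_sym (X Y : pset p q) : set_eq X Y -> set_eq Y X.
Proof. by move=> h x; split => /h. Qed.
Lemma set_eq_trans (X Y Z : pset p q) : set_eq X Y -> set_eq Y Z -> set_eq X Z.
Proof. by move=> h1 h2 x; split => [/h1/h2|/h2/h1]. Qed.

Lemma Hset_scale_pos (v : pt) c b : c > 0 -> set_eq (Hset (smul c v) b) (Hset v (b / c)).
Proof.
move=> hc x; rewrite /Hset bform_smull; split => h.
  apply: (Rmult_lt_reg_l c) => //; have -> : c * (b / c) = b by field; lra. lra.
have := Rmult_lt_compat_l c _ _ hc h; have -> : c * (b / c) = b by field; lra. lra.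
Qed.

Lemma Hset_scale_neg (v : pt) c b : c < 0 -> set_eq (Hset (smul c v) b) (Hset (vopp v) (- (b / c))).
Proof.
move=> hc x; rewrite /Hset bform_smull bform_opp; split => h.
  have : (-c) * bform v x < (-c) * (b / c).
    have -> : - c * (b / c) = - b by field; lra. lra.
  move=> h2; have := Rmult_lt_reg_l (-c) _ _ ltac:(lra) h2; lra.
have : bform v x < b / c by lra.
move=> h2; have := Rmult_lt_compat_l (-c) _ _ ltac:(lra) h2.
have -> : - c * (b / c) = - b by field; lra. lra.
Qed.

Lemma smul_smul a b (v : pt) : smul a (smul b v) = smul (a * b) v.
Proof. by apply: functional_extensionality => i; rewrite /smul; ring. Qed.

Lemma cone_smul c (v : pt) : cone v -> cone (smul c v).
Proof. rewrite /cone qform_smul => ->; ring. Qed.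

Lemma smul_nz c (v : pt) : c <> 0 -> v <> @vzero p q -> smul c v <> @vzero p q.
Proof.
move=> hc hv E; apply: hv; apply: functional_extensionality => i.
have : smul c v i = 0 by rewrite E.
rewrite /smul /vzero => h.
by case: (Rmult_integral _ _ h).
Qed.

End Aux.

Section Fwd.
Variables p q l : nat.
Hypotheses (hp : (2 <= p)%N) (hq : (2 <= q)%N).
Variable W : 'I_l -> pset p q.
Hypotheses (hdist : forall i j, i <> j -> ~ set_eq (W i) (W j))
  (hne : forall i, exists x, W i x)
  (hopen : forall i, is_open (W i))
  (htype : forall i, intersection_type (W i)).
Variables U1 U2 : pset p q.
Hypotheses (o1 : is_open U1) (o2 : is_open U2)
  (hcov : forall x, union_fam W x -> U1 x \/ U2 x)
  (hn1 : exists x, union_fam W x /\ U1 x) (hn2 : exists x, union_fam W x /\ U2 x)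
  (hdis : forall x, union_fam W x -> U1 x -> U2 x -> False).

Definition side1 i := forall x, W i x -> U1 x.

Lemma piece_side i : side1 i \/ (forall x, W i x -> U2 x).
Proof.
have := @conn_int p q hp hq (W i) (htype i) (hne i) U1 U2 o1 o2.
apply.
  by move=> x hx; apply: hcov; exists i.
by move=> x hx; apply: hdis; exists i.
Qed.

Definition opp i j := (side1 i /\ ~ side1 j) \/ (~ side1 i /\ side1 j).

Lemma opp_disj i j : opp i j -> forall z, W i z -> W j z -> False.
Proof.
have H : forall a b, side1 a -> ~ side1 b -> forall z, W a z -> W b z -> False.
  move=> a b ha hb z za zb.
  case: (piece_side b) => // hb2.
  by apply: (hdis (x := z)); [exists a | apply: ha | apply: hb2].
move=> [[h1 h2]|[h1 h2]] z z1 z2; [exact: (H i j h1 h2 z z1 z2) | exact: (H j i h2 h1 z z2 z1)].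
Qed.

Lemma opp_sym i j : opp i j -> opp j i.
Proof. by rewrite /opp; tauto. Qed.

Lemma ex_s1 : exists i, side1 i.
Proof.
case: hn1 => x [[i hi] hx]; exists i.
case: (piece_side i) => // h; exfalso.
by apply: (hdis (x := x)) => //; [exists i | apply: h].
Qed.

Lemma ex_s2 : exists i, ~ side1 i.
Proof.
case: hn2 => x [[i hi] hx]; exists i => h.
by apply: (hdis (x := x)) => //; [exists i | apply: h].
Qed.

Lemma ex_opp k : exists j, opp k j.
Proof.
case: (classic (side1 k)) => hk.
  by case: ex_s2 => j hj; exists j; left.
by case: ex_s1 => j hj; exists j; right.
Qed.

Lemma opp_or i j m : opp i j -> opp m j \/ opp m i.
Proof. rewrite /opp; case: (classic (side1 m)); tauto. Qed.

Lemma opp_neq i j : opp i j -> i <> j.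
Proof. by rewrite /opp => h E; subst; tauto. Qed.

Lemma eq_idx i j : set_eq (W i) (W j) -> i = j.
Proof. by move=> h; apply: NNPP => hij; apply: (hdist hij). Qed.

Lemma card2 (k j : 'I_l) : k <> j -> (forall m, m = k \/ m = j) -> l = 2%N.
Proof.
move=> hkj H.
have e : [set: 'I_l] = [set k; j].
  by apply/setP => m; rewrite !inE; case: (H m) => ->; rewrite eqxx ?orbT.
have := cards2 k j; rewrite -e cardsT card_ord => ->.
by move/eqP/negbTE: hkj => ->.
Qed.

Lemma caseA : (exists k a, set_eq (W k) (translate a (@US p q)) \/ set_eq (W k) (translate a (@UT p q))) ->
  l = 2%N /\ exists (i j : 'I_l) (v : pt p q),
       i <> j /\ set_eq (W i) (translate v (@US p q)) /\ set_eq (W j) (translate v (@UT p q)).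
Proof.
move=> [k [a [hk|hk]]]; have [j hj] := ex_opp k; have hkj := opp_neq hj.
- have hjW := disj_US hp hq hk (htype j) (opp_disj hj).
  have all2 : forall m, m = k \/ m = j.
    move=> m; case: (opp_or m hj) => hm.
      left; apply: eq_idx; apply: set_eq_trans _ (set_eq_sym hk).
      by apply: (disj_UT hp hq hjW (htype m)) => z z1 z2; apply: (opp_disj hm z2 z1).
    right; apply: eq_idx; apply: set_eq_trans _ (set_eq_sym hjW).
    by apply: (disj_US hp hq hk (htype m)) => z z1 z2; apply: (opp_disj hm z2 z1).
  split; first exact: card2 hkj all2.
  by exists k, j, a.
- have hjW := disj_UT hp hq hk (htype j) (opp_disj hj).
  have all2 : forall m, m = k \/ m = j.
    move=> m; case: (opp_or m hj) => hm.
      left; apply: eq_idx; apply: set_eq_trans _ (set_eq_sym hk).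
      by apply: (disj_US hp hq hjW (htype m)) => z z1 z2; apply: (opp_disj hm z2 z1).
    right; apply: eq_idx; apply: set_eq_trans _ (set_eq_sym hjW).
    by apply: (disj_UT hp hq hk (htype m)) => z z1 z2; apply: (opp_disj hm z2 z1).
  split; first exact: card2 hkj all2.
  by exists j, k, a; split => //; move=> E; apply: hkj.
Qed.

Lemma caseB : (forall k, exists v al, cone v /\ v <> @vzero p q /\ set_eq (W k) (Hset v al)) ->
  exists (v : pt p q) (alpha : 'I_l -> R) (k0 : nat) (sigma : 'I_l -> 'I_l),
       cone v /\ v <> @vzero p q /\
       (1 <= k0)%N /\ (k0 <= l - 1)%N /\ bijective sigma /\
       (forall i j : 'I_l, nat_of_ord j = (nat_of_ord i).+1 ->
          if (nat_of_ord j == k0)%N then alpha i >= alpha j else alpha i > alpha j) /\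
       (forall i : 'I_l,
          if (i < k0)%N then set_eq (W (sigma i)) (Hset v (alpha i))
          else set_eq (W (sigma i)) (Hset (vopp v) (- alpha i))).
Proof.
move=> HH.
have [s0 hs0] := ex_s1. have [t0 ht0] := ex_s2.
have [v0 [a0 [hc0 [hv0 hW0]]]] := HH s0.
have ost : opp s0 t0 by left.
have [c1 [w1 [b1 [hc1 [hw1 hWt0]]]]] := disj_H hW0 hc0 hv0 (htype t0) (opp_disj ost).
have hcw1 : cone w1 by rewrite hw1; apply: cone_smul.
have hvw1 : w1 <> @vzero p q by rewrite hw1; apply: smul_nz => //; lra.
have claim : forall k, exists be, (side1 k -> set_eq (W k) (Hset v0 be)) /\
    (~ side1 k -> set_eq (W k) (Hset (vopp v0) (- be))).
  move=> k; case: (classic (side1 k)) => hk.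
    have okt : opp t0 k by right.
    have [c2 [w2 [b2 [hc2 [hw2 hWk]]]]] := disj_H hWt0 hcw1 hvw1 (htype k) (opp_disj okt).
    exists (b2 / (c2 * c1)); split => // _.
    apply: set_eq_trans hWk _; rewrite hw2 hw1 smul_smul.
    apply: Hset_scale_pos; nra.
  have osk : opp s0 k by left.
  have [c2 [w2 [b2 [hc2 [hw2 hWk]]]]] := disj_H hW0 hc0 hv0 (htype k) (opp_disj osk).
  exists (b2 / c2); split => // _.
  apply: set_eq_trans hWk _; rewrite hw2.
  by apply: Hset_scale_neg.
have [be hbe] : exists be : 'I_l -> R, forall k, (side1 k -> set_eq (W k) (Hset v0 (be k))) /\
    (~ side1 k -> set_eq (W k) (Hset (vopp v0) (- be k))).
  exists (fun k => proj1_sig (constructive_indefinite_description _ (claim k))).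
  move=> k; exact: (proj2_sig (constructive_indefinite_description _ (claim k))).
set sb := fun k => if excluded_middle_informative (side1 k) then true else false.
have hsb : forall k, sb k = true <-> side1 k.
  by move=> k; rewrite /sb; case: excluded_middle_informative.
have hsbn : forall k, ~~ sb k <-> ~ side1 k.
  move=> k; split => h.
    by move=> /hsb hk; rewrite hk in h.
  by apply/negP => /hsb.
have hvv := eip_pos hv0.
have Hcross : forall s t, sb s -> ~~ sb t -> be t <= be s.
  move=> s t /hsb hs /hsbn ht; apply: Rnot_lt_le => hlt.
  set m := ((be s + be t) / 2) / eip v0 v0.
  have hb : bform v0 (smul m (Jf v0)) = (be s + be t) / 2.
    by rewrite bform_smul bform_J /m; field; lra.
  have ost' : opp s t by left.
  apply: (opp_disj ost' (z := smul m (Jf v0))).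
    by apply/((hbe s).1 hs); rewrite /Hset hb; lra.
  by apply/((hbe t).2 ht); rewrite /Hset bform_opp hb; lra.
have HdS : forall s s', sb s -> sb s' -> s <> s' -> be s <> be s'.
  move=> s s' /hsb hs /hsb hs' hne' E; apply: hne'; apply: eq_idx.
  apply: set_eq_trans ((hbe s).1 hs) _; rewrite E; apply: set_eq_sym; exact: (hbe s').1 hs'.
have HdT : forall s s', ~~ sb s -> ~~ sb s' -> s <> s' -> be s <> be s'.
  move=> s s' /hsbn hs /hsbn hs' hne' E; apply: hne'; apply: eq_idx.
  apply: set_eq_trans ((hbe s).2 hs) _; rewrite E; apply: set_eq_sym; exact: (hbe s').2 hs'.
have HS : exists s, sb s by exists s0; apply/hsb.
have HT : exists t, ~~ sb t by exists t0; apply/hsbn.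
have [alpha [k [sigma [hk1 [hk2 [hbij [hcons hfin]]]]]]] := rank_result Hcross HdS HdT HS HT.
exists v0, alpha, k, sigma; do 6 (split => //).
move=> i; have [ha hs] := hfin i; rewrite ha.
case: (boolP (i < k)%N) => hi.
  by apply: (hbe _).1; apply/hsb; rewrite hs.
by apply: (hbe _).2; apply/hsbn; rewrite hs.
Qed.

End Fwd.

End MJ.
Import MJ.

Unset Implicit Arguments. Set Strict Implicit.
Local Open Scope R_scope.

Theorem lemma5p10 (p q l : nat) (hp : (2 <= p)%N) (hpq : (p <= q)%N)
  (W : 'I_l -> pset p q)
  (hdist : forall i j, i <> j -> ~ set_eq (W i) (W j))
  (hne : forall i, exists x, W i x)
  (hopen : forall i, is_open (W i))
  (htype : forall i, intersection_type (W i)) :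
  ~ is_connected (union_fam W) <->
  ( (exists (v : pt p q) (alpha : 'I_l -> R) (k0 : nat) (sigma : 'I_l -> 'I_l),
       cone v /\ v <> @vzero p q /\
       (1 <= k0)%N /\ (k0 <= l - 1)%N /\ bijective sigma /\
       (forall i j : 'I_l, nat_of_ord j = (nat_of_ord i).+1 ->
          if (nat_of_ord j == k0)%N then alpha i >= alpha j else alpha i > alpha j) /\
       (forall i : 'I_l,
          if (i < k0)%N then set_eq (W (sigma i)) (Hset v (alpha i))
          else set_eq (W (sigma i)) (Hset (vopp v) (- alpha i))))
    \/
    (l = 2%N /\ exists (i j : 'I_l) (v : pt p q),
       i <> j /\ set_eq (W i) (translate v (@US p q)) /\
       set_eq (W j) (translate v (@UT p q))) ).
Proof.
have hq2 : (2 <= q)%N := leq_trans hp hpq.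
split.
  move=> hnc.
  have [U1 [U2 [o1 [o2 [hcov [hn1 [hn2 hdis]]]]]]] := NNPP _ hnc.
  case: (classic (exists k a, set_eq (W k) (translate a (@US p q)) \/
                              set_eq (W k) (translate a (@UT p q)))) => hA.
    right; exact: (caseA hp hq2 hdist hne htype o1 o2 hcov hn1 hn2 hdis hA).
  left; apply: (caseB hp hq2 hdist hne htype o1 o2 hcov hn1 hn2 hdis).
  move=> k; case: (htype k) => [[a ha]|[[a ha]|hH]] //.
    by exfalso; apply: hA; exists k, a; left.
  by exfalso; apply: hA; exists k, a; right.
case=> [[v [alpha [k0 [sigma [hc [hv [hk1 [hk2 [hbij [hcons hW]]]]]]]]]]|[hl [i [j [v [hij [hi hj]]]]]]].
  exact: (back1 hne hopen hk1 hk2 hbij hcons hW).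
exact: (back2 hne hopen hl hij hi hj).
Qed.
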